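(* For integers $n\ge1$, $k\ge0$, $\ell\ge0$, let \[E(n,k,\ell)=\sum_{\substack{i_0+i_1+\cdots+i_k=n\\ j_0+j_1+\cdots+j_k=\ell}}\prod_{t=0}^kN(i_t,j_t+1),\] where the sum ranges over all compositions $(i_0,\ldots,i_k)$ of $n$ into $k+1$ positive parts and all weak compositions $(j_0,\ldots,j_k)$ of $\ell$ into $k+1$ nonnegative parts. Then $E(n,k,\ell)=N_k(n,\ell+1)$.
   Context: $N(i,j)=\frac1i\binom ij\binom i{j-1}$ is a Narayana number, and the generalized Narayana numbers are $N_k(n,r)=\frac{k+1}{n}\binom{n}{r+k}\binom{n}{r-1}$ (so $N_0=N$). *)

(* Defs.v *)
From mathcomp Require Import all_boot all_order all_algebra.
Set Implicit Arguments. Unset Strict Implicit. Unset Printing Implicit Defensive.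
Import GRing.Theory Num.Theory.
Local Open Scope ring_scope.

(* 'C(n, j - 1) with the convention 'C(n, -1) = 0 *)
Definition binom_pred (n j : nat) : nat := if j is j'.+1 then 'C(n, j') else 0%N.

Definition narayana (i j : nat) : rat :=
  (i%:R)^-1 * ('C(i, j))%:R * (binom_pred i j)%:R.

Definition gen_narayana (k n r : nat) : rat :=
  (k.+1)%:R / n%:R * ('C(n, r + k))%:R * (binom_pred n r)%:R.

(* Parts are bounded by n (resp. l), so ranging over 'I_n.+1 (resp. 'I_l.+1)
   captures all of them. *)
Definition E (n k l : nat) : rat :=
  \sum_(i : {ffun 'I_k.+1 -> 'I_n.+1} |
          ((\sum_(t < k.+1) (i t : nat))%N == n) && [forall t, (0 < i t)%N])
   \sum_(j : {ffun 'I_k.+1 -> 'I_l.+1} | (\sum_(t < k.+1) (j t : nat))%N == l)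
     \prod_(t < k.+1) narayana (i t) (j t).+1.

(* Main.v *)
Require Import Defs.
From mathcomp Require Import all_boot all_order all_algebra.
From mathcomp Require Import ring.
Set Implicit Arguments. Unset Strict Implicit. Unset Printing Implicit Defensive.
Import GRing.Theory Num.Theory.
Local Open Scope ring_scope.

Definition Tc (m a c : nat) : rat :=
  if m is 0 then ((a == 0) && (c == 0))%:R
  else m%:R / a%:R * ('C(a, c))%:R * ('C(a, c + m))%:R.

Lemma TcE k b c : (0 < b)%N -> Tc k b c = k%:R / b%:R * ('C(b, c))%:R * ('C(b, c + k))%:R.
Proof. case: k => [|k] hb //=; rewrite !mul0r; move: hb; by case: b. Qed.

Lemma rel1 b c : c%:R * ('C(b, c))%:R = (b%:R + 1 - c%:R) * (binom_pred b c)%:R :> rat.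
Proof.
case: c => [|c] /=; first by rewrite !mul0r mulr0.
rewrite -natrM mul_bin_left.
case: (leqP c b) => hcb.
  by rewrite natrM natrB // -(addn1 c) natrD; congr (_ * _); ring.
by rewrite (bin_small hcb) !muln0 mulr0.
Qed.

Lemma Tc_rec k b c :
  Tc k.+1 b.+1 c = Tc k b c + Tc k.+1 b c +
    (if c is c'.+1 then Tc k.+1 b c' + Tc k.+2 b c' else 0).
Proof.
case: b => [|b].
  rewrite /Tc /=. case: k => [|k]; case: c => [|c] /=; rewrite ?invr0 ?mulr0 ?mul0r ?addr0 ?add0r //.
  - by rewrite (@bin_small 1 (c.+1 + 1)) ?mulr0 // addn1.
  - by rewrite (@bin_small 1 (c.+1 + k.+2)) ?mulr0 // addnS.
move: (b.+1) (ltn0Sn b) => bb hb {b}.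
rewrite !TcE //.
have e1 := rel1 bb c.
have e2 : (c + k).+1%:R * ('C(bb, (c + k).+1))%:R = (bb%:R + 1 - (c + k).+1%:R) * ('C(bb, c + k))%:R :> rat
  := rel1 bb (c + k).+1.
set U := (binom_pred bb c)%:R : rat.
have ->: ('C(bb.+1, c))%:R = ('C(bb, c))%:R + U :> rat.
  by rewrite /U; case: c {e1 e2 U} => [|c] /=; rewrite ?bin0 ?addr0 // binS natrD.
have ->: ('C(bb.+1, c + k.+1))%:R = ('C(bb, (c + k).+1))%:R + ('C(bb, c + k))%:R :> rat.
  by rewrite addnS binS natrD.
have -> : (if c is c'.+1 then Tc k.+1 bb c' + Tc k.+2 bb c' else 0) =
   k.+1%:R / bb%:R * U * ('C(bb, c + k))%:R + k.+2%:R / bb%:R * U * ('C(bb, (c+k).+1))%:R.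
  rewrite /U; case: c {e1 e2 U} => [|c] /=; first by rewrite !mulr0 !mul0r addr0.
  by rewrite !addSn !addnS.
rewrite !addnS.
move: e1 e2. rewrite -/U.
set V := ('C(bb, c))%:R : rat. set W := ('C(bb, c + k))%:R : rat. set Z := ('C(bb, (c + k).+1))%:R : rat.
rewrite -!natr1 !natrD.
have hb0 : bb%:R != 0 :> rat by rewrite pnatr_eq0 -lt0n.
have hb1 : bb%:R + 1 != 0 :> rat by rewrite natr1 pnatr_eq0.
move=> e1 e2.
have key : forall x : rat, x = 0 -> forall y, y = x -> y = 0 by move=> x -> y ->.
apply/eqP; rewrite -subr_eq0; apply/eqP.
apply: (key (((W + Z) * (c%:R * V - (bb%:R + 1 - c%:R) * U) -
   (V + U) * ((c%:R + k%:R + 1) * Z - (bb%:R + 1 - (c%:R + k%:R + 1)) * W)) / (bb%:R * (bb%:R + 1)))).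
  by rewrite e1 e2 !subrr !mulr0 subrr mul0r.
field. by rewrite hb0 hb1.
Qed.

Notation PP := {poly {poly rat}}.
Arguments Tc : simpl never.
Definition Pm (n l m : nat) : PP := \poly_(a < n.+1) \poly_(c < l.+1) Tc m a c.
Definition Hp (n l : nat) : PP := \poly_(a < n.+1) \poly_(c < l.+1) narayana a c.+1.
Definition Yp : PP := ('X : {poly rat})%:P.
Definition eqL (l d : nat) (p q : PP) :=
  forall a c, (a <= d)%N -> (c <= l)%N -> p`_a`_c = q`_a`_c.

Lemma eqL_mull l d r p q : eqL l d p q -> eqL l d (r * p) (r * q).
Proof.
move=> h a c ha hc; rewrite !coefM !coef_sum; apply: eq_bigr => j _.
rewrite !coefM; apply: eq_bigr => i _; rewrite h //.
  exact: leq_trans (leq_subr _ _) ha.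
exact: leq_trans (leq_subr _ _) hc.
Qed.

Lemma eqL_X l d p q : eqL l d p q -> eqL l d.+1 ('X * p) ('X * q).
Proof. by move=> h [|a] c ha hc; rewrite !coefXM //=; apply: h. Qed.

Lemma eqL_add l d p q p' q' : eqL l d p q -> eqL l d p' q' -> eqL l d (p + p') (q + q').
Proof. by move=> h h' a c ha hc; rewrite !coefD h // h'. Qed.

Lemma eqL_sym l d p q : eqL l d p q -> eqL l d q p.
Proof. by move=> h a c ha hc; rewrite h. Qed.

Lemma eqL_trans l d p q r : eqL l d p q -> eqL l d q r -> eqL l d p r.
Proof. by move=> h h' a c ha hc; rewrite h // h'. Qed.

Lemma eqL_eq l d p q : p = q -> eqL l d p q.
Proof. by move=> ->. Qed.

Lemma coefY (p : PP) a c : (Yp * p)`_a`_c = if c is c'.+1 then p`_a`_c' else 0.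
Proof. by rewrite /Yp coefCM coefXM; case: c. Qed.

Lemma Hp_P1 n l : Hp n l = Pm n l 1.
Proof.
apply/polyP => a; rewrite !coef_poly; case: ifP => // _.
apply/polyP => c; rewrite !coef_poly; case: ifP => // _.
rewrite /narayana /Tc /= addn1 mul1r; ring.
Qed.

Lemma Pm_rec n l d m : (0 < m)%N -> (d < n)%N ->
  eqL l d.+1 (Pm n l m) ('X * (Pm n l m.-1 + Pm n l m + Yp * Pm n l m + Yp * Pm n l m.+1)).
Proof.
case: m => // m _ hd [|a] c ha hc; rewrite coefXM //=.
  by rewrite coef0 /Pm coef_poly /= coef_poly ltnS hc /Tc invr0 mulr0 !mul0r.
rewrite !coefD.
have ha' : (a < n.+1)%N by apply: leq_trans ha _; apply: leq_trans hd _.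
have ha'' : (a.+1 < n.+1)%N by apply: leq_trans ha _.
rewrite !coefY /Pm !coef_poly ha' ha'' /= !coef_poly ltnS hc Tc_rec.
case: c hc => [|c] hc //=.
  by rewrite !addr0.
by rewrite !coef_poly ltnS (leq_trans (leqnSn c) hc) addrA.
Qed.

Lemma coef0_exp (p : PP) m : (p ^+ m)`_0 = (p`_0) ^+ m.
Proof. by elim: m => [|m IH]; rewrite ?expr0 ?coef1 // !exprS coef0M IH. Qed.

Lemma base n l m : eqL l 0 (Hp n l ^+ m) (Pm n l m).
Proof.
case=> // c _ hc.
have h0 : (Hp n l)`_0 = 0.
  by apply/polyP => j; rewrite !coef_poly coef0; case: ifP => // _; rewrite /narayana invr0 !mul0r.
rewrite coef0_exp h0 coef_poly /= coef_poly ltnS hc.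
case: m => [|m]; first by rewrite expr0 coef1.
by rewrite expr0n /= coef0 /Tc invr0 mulr0 !mul0r.
Qed.

Lemma main n l d : (d <= n)%N -> forall m, eqL l d (Hp n l ^+ m) (Pm n l m).
Proof.
elim: d => [|d IH] hd; first exact: base.
have IH' := IH (ltnW hd).
have S m : (0 < m)%N -> eqL l d.+1 (Pm n l m)
   ('X * (Hp n l ^+ m.-1 + Hp n l ^+ m + Yp * Hp n l ^+ m + Yp * Hp n l ^+ m.+1)).
  move=> hm; apply: eqL_trans (@Pm_rec n l d m hm hd) _.
  apply: eqL_X; apply: eqL_sym.
  by apply: eqL_add; [apply: eqL_add; [apply: eqL_add|apply: eqL_mull]|apply: eqL_mull].
have FE : eqL l d.+1 (Hp n l) ('X * (1 + Hp n l + Yp * Hp n l + Yp * Hp n l ^+ 2)).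
  by rewrite Hp_P1; have := S 1%N isT; rewrite expr0 expr1 -Hp_P1.
case=> [|m].
  move=> a c ha hc; rewrite expr0 /Pm coef1 !coef_poly ltnS (leq_trans ha hd) coef_poly ltnS hc /Tc.
  by case: a {ha} => [|a] /=; rewrite ?coef1 ?coef0.
apply: eqL_trans (eqL_sym (S m.+1 isT)).
rewrite exprS mulrC.
apply: eqL_trans (eqL_mull (Hp n l ^+ m) FE) _.
apply: eqL_eq => /=; rewrite !exprS; ring.
Qed.

Lemma prod_scaleX (R : comNzRingType) (I : finType) (f : I -> R) (g : I -> nat) :
  \prod_i (f i *: 'X^(g i)) = (\prod_i f i) *: 'X^(\sum_i g i).
Proof.
rewrite -mul_polyC rmorph_prod.
rewrite (big_morph (fun s => 'X^s : {poly R}) (fun a b => exprD 'X a b) (expr0 'X)).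
rewrite -big_split /=; apply: eq_bigr => i _; by rewrite mul_polyC.
Qed.

Lemma prod_const_ord (R : comNzRingType) (p : R) k : \prod_(t < k) p = p ^+ k.
Proof. by elim: k => [|k IH]; rewrite ?big_ord0 ?expr0 // big_ord_recr IH exprSr. Qed.

Lemma Hp_sum n l : Hp n l =
  \sum_(a : 'I_n.+1) (\sum_(c : 'I_l.+1) narayana a c.+1 *: 'X^c) *: 'X^a.
Proof. by rewrite /Hp poly_def; apply: eq_bigr => a _; rewrite poly_def. Qed.

Lemma E_coef n k l : E n k l = (Hp n l ^+ k.+1)`_n`_l.
Proof.
rewrite Hp_sum -prod_const_ord bigA_distr_bigA /= coef_sum coef_sum.
rewrite /E big_mkcond /=; apply: eq_bigr => fi _.
rewrite prod_scaleX bigA_distr_bigA /= coefZ coefXn.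
case: ifP => /andP.
  move=> [/eqP hs hpos]; rewrite eq_sym hs eqxx mulr1.
  rewrite coef_sum big_mkcond; apply: eq_bigr => fj _.
  rewrite prod_scaleX coefZ coefXn eq_sym; case: ifP => _; by rewrite ?mulr1 ?mulr0.
move=> hc.
case: eqP => [hs|hs]; last by rewrite mulr0 coef0.
rewrite mulr1 coef_sum big1 // => fj _.
have : ~~ [forall t, (0 < fi t)%N] by apply/negP => hp; apply: hc; rewrite -hs eqxx.
move/forallPn => [t]; rewrite lt0n negbK => /eqP ht.
rewrite (bigD1 t) //= ht /narayana invr0 !mul0r scale0r mul0r coef0 //.
Qed.

Theorem lemma4p1 (n k l : nat) : (1 <= n)%N -> E n k l = gen_narayana k n l.+1.
Proof.
move=> _.
rewrite E_coef (@main n l n (leqnn n) k.+1 n l (leqnn n) (leqnn l)) /Pm !coef_poly !ltnSn.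
rewrite /Tc /gen_narayana /= addSnnS.
rewrite coef_poly ltnSn; ring.
Qed.
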